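(* For $n\ge1$, the number of equivalence classes of period configurations of Parallel Diffusion on the labelled complete graph $K_n$ (vertex set $\{1,\dots,n\}$) equals $$\sum_{(B_1,\dots,B_N)}\ \prod_{i=2}^{N}\bigl(|B_{i-1}|+|B_i|-1\bigr),$$ where the sum runs over all ordered set partitions $(B_1,\dots,B_N)$ of $\{1,\dots,n\}$ into nonempty blocks (any $N\ge1$), and the empty product (for $N=1$) equals $1$.
   Context: Parallel Diffusion on a graph $G$: a configuration assigns an integer stack size $|v|$ to each vertex. One firing step replaces every stack size simultaneously by $|v| + \#\{u\in N(v): |u|>|v|\} - \#\{u\in N(v): |u|<|v|\}$. A period configuration is a configuration $D$ such that repeated firing starting from $D$ returns to $D$ after some positive number of steps. Two configurations on the same labelled graph are equivalent if one is obtained from the other by adding the same integer to every vertex's stack size. (The ordered partition $(B_1,\dots,B_N)$ records which vertices share each of the $N$ distinct stack sizes, listed in increasing order of stack size.) *)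

(* Defs.v *)
From mathcomp Require Import all_boot all_order all_algebra.
Set Implicit Arguments. Unset Strict Implicit. Unset Printing Implicit Defensive.
Import Order.TTheory GRing.Theory Num.Theory.

Definition config (T : finType) := T -> int.

Definition pd_fire (T : finType) (adj : rel T) (D : config T) : config T :=
  fun v => (D v + (#|[set u | adj v u & (D v < D u)%R]|%:Z)
                - (#|[set u | adj v u & (D u < D v)%R]|%:Z))%R.

Definition pd_period (T : finType) (adj : rel T) (D : config T) : Prop :=
  exists k : nat, (0 < k)%N /\ iter k (pd_fire adj) D = D.

Definition config_equiv (T : finType) (D D' : config T) : Prop :=
  exists c : int, forall v, D' v = (D v + c)%R.

Definition complete_adj (n : nat) : rel 'I_n := fun u v => u != v.

Definition ordered_set_partition (n N : nat) (t : N.-tuple {set 'I_n}) : bool :=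
  [&& [forall i : 'I_N, tnth t i != set0],
      [forall i : 'I_N, forall j : 'I_N, (i != j) ==> [disjoint tnth t i & tnth t j]]
    & (\bigcup_(i < N) tnth t i == [set: 'I_n])].

(* prod_{i=2}^N (|B_{i-1}| + |B_i| - 1), blocks indexed from 0 in the tuple. *)
Definition osp_weight (n N : nat) (t : N.-tuple {set 'I_n}) : nat :=
  \prod_(1 <= i < N) (#|nth set0 t i.-1| + #|nth set0 t i| - 1).

(* Sum over all ordered set partitions; the number of blocks N ranges over 1..n
   (a partition of an n-set into nonempty blocks has at most n blocks). *)
Definition osp_sum (n : nat) : nat :=
  \sum_(1 <= N < n.+1) \sum_(t : N.-tuple {set 'I_n} | ordered_set_partition t) osp_weight t.

(* Main.v *)
Require Import Defs.
From mathcomp Require Import all_boot all_order all_algebra.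
From mathcomp Require Import zify ring lra.
From Stdlib Require Import FunctionalExtensionality.
Set Implicit Arguments. Unset Strict Implicit. Unset Printing Implicit Defensive.
Import Order.TTheory GRing.Theory Num.Theory.

Local Open Scope ring_scope.

Definition hv (n : nat) (x : config 'I_n) (v : 'I_n) : int :=
  (#|[set u | x v < x u]|%:Z - #|[set u | x u < x v]|%:Z).

Definition fire (n : nat) (x : config 'I_n) : config 'I_n := pd_fire (@complete_adj n) x.

Lemma fireE (n : nat) (x : config 'I_n) v : fire x v = x v + hv x v.
Proof.
rewrite /fire /pd_fire /hv /complete_adj /=.
have E1 : [set u | v != u & x v < x u] = [set u | x v < x u].
  apply/setP => u; rewrite !inE; case: eqVneq => [->|//]; by rewrite ltxx.
have E2 : [set u | v != u & x u < x v] = [set u | x u < x v].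
  apply/setP => u; rewrite !inE; case: eqVneq => [->|//]; by rewrite ltxx.
by rewrite E1 E2 addrA.
Qed.

Lemma card_sumz (n : nat) (P : pred 'I_n) :
  (#|[set u | P u]|%:Z) = \sum_u (P u)%:R :> int.
Proof.
rewrite (eq_bigr (fun u => if P u then 1 else 0)); last by move=> u _; case: (P u).
rewrite -big_mkcond sumr_const /= natz; congr (Posz _).
by apply: eq_card => u; rewrite inE.
Qed.

Lemma hv_sum (n : nat) (x : config 'I_n) v :
  hv x v = \sum_u Num.sg (x u - x v).
Proof.
rewrite /hv !card_sumz -sumrB; apply: eq_bigr => u _.
case: (ltrgtP (x u) (x v)) => h.
- by rewrite ltr0_sg ?subr_lt0 // ltNge (ltW h) /= sub0r.
- by rewrite gtr0_sg ?subr_gt0 // ltNge (ltW h) /= subr0.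
- by rewrite h !subrr sgr0.
Qed.

Lemma hv_pair (n : nat) (x y : config 'I_n) :
  2 * \sum_v hv x v * y v = \sum_v \sum_u Num.sg (x u - x v) * (y v - y u).
Proof.
have E : \sum_v hv x v * y v = \sum_v \sum_u Num.sg (x u - x v) * y v.
  by apply: eq_bigr => v _; rewrite hv_sum mulr_suml.
have E2 : \sum_v hv x v * y v = \sum_v \sum_u - (Num.sg (x u - x v) * y u).
  rewrite E exchange_big /=; apply: eq_bigr => v _; apply: eq_bigr => u _.
  by rewrite -opprB sgrN mulNr.
have -> : forall z : int, 2 * z = z + z by move=> z; ring.
rewrite {1}E E2 -big_split /=; apply: eq_bigr => v _.
rewrite -big_split /=; apply: eq_bigr => u _; by rewrite mulrBr.
Qed.

Definition S2 (n : nat) (x : config 'I_n) : int := \sum_v \sum_u `|x v - x u|.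
Definition K2 (n : nat) (x : config 'I_n) : int := \sum_v hv x v ^+ 2.
Definition Q2 (n : nat) (x : config 'I_n) : int := \sum_v x v ^+ 2.

Lemma hv_self (n : nat) (x : config 'I_n) : 2 * \sum_v hv x v * x v = - S2 x.
Proof.
rewrite hv_pair /S2 -sumrN; apply: eq_bigr => v _; rewrite -sumrN; apply: eq_bigr => u _.
case: (ltrgtP (x u) (x v)) => h.
- by rewrite ltr0_sg ?subr_lt0 // mulN1r.
- by rewrite gtr0_sg ?subr_gt0 // mul1r opprB.
- by rewrite h subrr sgr0 mul0r oppr0.
Qed.

Lemma hv_le (n : nat) (x y : config 'I_n) : 2 * \sum_v hv x v * y v <= S2 y.
Proof.
rewrite hv_pair /S2; apply: ler_sum => v _; apply: ler_sum => u _.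
case: (ltrgtP (x u) (x v)) => h.
- rewrite ltr0_sg ?subr_lt0 // mulN1r -normrN opprB; exact: ler_norm.
- rewrite gtr0_sg ?subr_gt0 // mul1r; exact: ler_norm.
- by rewrite h subrr sgr0 mul0r.
Qed.

Lemma Q2_fire (n : nat) (x : config 'I_n) : Q2 (fire x) = Q2 x - S2 x + K2 x.
Proof.
rewrite /Q2 /K2 -hv_self mulr_sumr -!big_split /=; apply: eq_bigr => v _.
rewrite fireE.
ring.
Qed.

Lemma S2_fire (n : nat) (x : config 'I_n) : 2 * K2 x <= S2 x + S2 (fire x).
Proof.
have := hv_le x (fire x).
have -> : \sum_v hv x v * fire x v = \sum_v hv x v * x v + K2 x.
  by rewrite /K2 -big_split /=; apply: eq_bigr => v _; rewrite fireE; ring.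
rewrite mulrDr; have := hv_self x; lra.
Qed.

Lemma S2_fire_eq (n : nat) (x : config 'I_n) :
  S2 x + S2 (fire x) = 2 * K2 x -> forall u v, x v < x u -> fire x u <= fire x v.
Proof.
move=> H u v Hvu.
set y := fire x.
have E1 : \sum_v hv x v * y v = \sum_v hv x v * x v + K2 x.
  by rewrite /K2 -big_split /=; apply: eq_bigr => w _; rewrite /y fireE; ring.
have E2 := hv_self x.
have E3 : \sum_v \sum_u (`|y v - y u| - Num.sg (x u - x v) * (y v - y u)) = 0.
  have -> : \sum_v \sum_u (`|y v - y u| - Num.sg (x u - x v) * (y v - y u)) =
     S2 y - 2 * \sum_v hv x v * y v.
    rewrite hv_pair /S2 -sumrB; apply: eq_bigr => w _; by rewrite -sumrB.
  rewrite E1 mulrDr; lra.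
have T : forall w1 w2 : 'I_n, 0 <= `|y w1 - y w2| - Num.sg (x w2 - x w1) * (y w1 - y w2).
  move=> w1 w2; rewrite subr_ge0.
  case: (ltrgtP (x w2) (x w1)) => h.
  - rewrite ltr0_sg ?subr_lt0 // mulN1r -normrN; exact: ler_norm.
  - rewrite gtr0_sg ?subr_gt0 // mul1r; exact: ler_norm.
  - by rewrite h subrr sgr0 mul0r.
have T2 : forall w, \sum_u (`|y w - y u| - Num.sg (x u - x w) * (y w - y u)) = 0.
  move=> w; apply: (psumr_eq0P (P := predT) _ E3) => // w' _.
  by apply: sumr_ge0 => u0 _; apply: T.
have := psumr_eq0P (P := predT) (fun u _ => T v u) (T2 v) (i := u) isT.
rewrite gtr0_sg ?subr_gt0 // mul1r => /eqP; rewrite subr_eq0 => /eqP Habs.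
have : 0 <= y v - y u by rewrite -Habs.
by rewrite subr_ge0.
Qed.

Lemma fire_eq (n : nat) (x : config 'I_n) u v : x u = x v -> fire x u = fire x v.
Proof.
move=> h; rewrite !fireE /hv h.
have -> : [set w | x v < x w] = [set w | x v < x w] by [].
by [].
Qed.

Lemma iter_eq (n : nat) k (x : config 'I_n) u v :
  x u = x v -> iter k (@fire n) x u = iter k (@fire n) x v.
Proof. by elim: k => //= k IH h; apply: fire_eq; apply: IH. Qed.

Definition Rev (n : nat) (x : config 'I_n) := forall u v, x u < x v -> fire x v < fire x u.

Lemma period_Rev (n : nat) (D : config 'I_n) : pd_period (@complete_adj n) D -> Rev D.
Proof.
case=> k [k0 Hk].
have Hk' : iter k (@fire n) D = D by [].
pose X t := iter t (@fire n) D.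
have XS : forall t, X t.+1 = fire (X t) by [].
have hQ : \sum_(0 <= t < k) (Q2 (X t.+1) - Q2 (X t)) = 0.
  by rewrite telescope_sumr // /X Hk' /= subrr.
have hS : \sum_(0 <= t < k) (S2 (X t.+1) - S2 (X t)) = 0.
  by rewrite telescope_sumr // /X Hk' /= subrr.
pose b t := S2 (X t) + S2 (X t.+1) - 2 * K2 (X t).
have bge : forall t, 0 <= b t by move=> t; rewrite /b XS subr_ge0; apply: S2_fire.
have hb : \sum_(0 <= t < k) b t = 0.
  have -> : \sum_(0 <= t < k) b t =
     \sum_(0 <= t < k) (S2 (X t.+1) - S2 (X t)) -
     2 * \sum_(0 <= t < k) (Q2 (X t.+1) - Q2 (X t)).
    rewrite mulr_sumr -sumrB; apply: eq_bigr => t _; rewrite /b XS Q2_fire; ring.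
  by rewrite hS hQ mulr0 subr0.
have b0 : b 0%N = 0.
  move: hb; rewrite big_mkord => hb.
  have := psumr_eq0P (P := predT) (fun t _ => bge (nat_of_ord t)) hb (i := Ordinal k0) isT.
  by [].
have W : forall u v, D v < D u -> fire D u <= fire D v.
  apply: S2_fire_eq; move: b0; rewrite /b /X /=; lra.
move=> u v huv.
have := W v u huv; rewrite le_eqVlt => /orP [/eqP Heq|//].
have := iter_eq k.-1 Heq.
rewrite -!iterSr prednK // Hk' => Habs.
by move: huv; rewrite Habs ltxx.
Qed.

Lemma Rev_period (n : nat) (D : config 'I_n) : Rev D -> pd_period (@complete_adj n) D.
Proof.
move=> R; exists 2%N; split => //.
have H2 : forall v, fire (fire D) v = D v.
  move=> v; rewrite fireE /hv.
  have -> : [set u | fire D v < fire D u] = [set u | D u < D v].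
    apply/setP => u; rewrite !inE.
    case: (ltrgtP (D u) (D v)) => h.
    - by rewrite (R _ _ h).
    - by rewrite ltNge (ltW (R _ _ h)).
    - by rewrite (fire_eq h) ltxx.
  have -> : [set u | fire D u < fire D v] = [set u | D v < D u].
    apply/setP => u; rewrite !inE.
    case: (ltrgtP (D u) (D v)) => h.
    - by rewrite ltNge (ltW (R _ _ h)).
    - by rewrite (R _ _ h).
    - by rewrite (fire_eq h) ltxx.
  rewrite fireE /hv; ring.
by apply: functional_extensionality => v; apply: H2.
Qed.

Local Open Scope ring_scope.

Lemma card_split (n : nat) (P Q : pred 'I_n) :
  #|[set w | P w]| = (#|[set w | P w && Q w]| + #|[set w | P w && ~~ Q w]|)%N.
Proof.
rewrite -(cardsID [set w | Q w] [set w | P w]).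
have -> : [set w | P w] :&: [set w | Q w] = [set w | P w && Q w] by apply/setP => w; rewrite !inE.
have -> : [set w | P w] :\: [set w | Q w] = [set w | P w && ~~ Q w].
  by apply/setP => w; rewrite !inE andbC.
by [].
Qed.

Definition cnt (n : nat) (x : config 'I_n) u v : nat :=
  addn #|[set w | (x u < x w) && (x w <= x v)]| #|[set w | (x u <= x w) && (x w < x v)]|.

Lemma fire_diff (n : nat) (x : config 'I_n) u v : x u < x v ->
  fire x u - fire x v = x u - x v + (cnt x u v)%:Z.
Proof.
move=> huv; rewrite !fireE /hv /cnt.
rewrite (card_split (fun w => x u < x w) (fun w => x w <= x v)).
rewrite (card_split (fun w => x w < x v) (fun w => x u <= x w)).
have -> : [set w | (x u < x w) && ~~ (x w <= x v)] = [set w | x v < x w].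
  apply/setP => w; rewrite !inE -ltNge; apply/andP/idP => [[]//|h]; split=> //; lra.
have -> : [set w | (x w < x v) && ~~ (x u <= x w)] = [set w | x w < x u].
  apply/setP => w; rewrite !inE -ltNge; apply/andP/idP => [[]//|h]; split=> //; lra.
have -> : [set w | (x w < x v) && (x u <= x w)] = [set w | (x u <= x w) && (x w < x v)].
  by apply/setP => w; rewrite !inE andbC.
rewrite !PoszD; ring.
Qed.

Lemma Rev_iff (n : nat) (x : config 'I_n) :
  Rev x <-> (forall u v, x u < x v -> x v - x u < (cnt x u v)%:Z).
Proof.
split=> H u v huv.
- have := H u v huv; have := fire_diff huv; lra.
- have := H u v huv; have := fire_diff huv; lra.
Qed.

Lemma cnt_add (n : nat) (x : config 'I_n) u v w : x u < x w -> x w < x v ->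
  cnt x u v = (cnt x u w + cnt x w v)%N.
Proof.
move=> h1 h2; rewrite /cnt.
rewrite (card_split (fun y => (x u < x y) && (x y <= x v)) (fun y => x y <= x w)).
rewrite (card_split (fun y => (x u <= x y) && (x y < x v)) (fun y => x y < x w)).
have -> : [set y | ((x u < x y) && (x y <= x v)) && (x y <= x w)] =
          [set y | (x u < x y) && (x y <= x w)].
  apply/setP => y; rewrite !inE; case: (x u < x y) => //=.
  case E: (x y <= x w); rewrite ?andbT ?andbF //; apply: (le_trans E); exact: ltW.
have -> : [set y | ((x u < x y) && (x y <= x v)) && ~~ (x y <= x w)] =
          [set y | (x w < x y) && (x y <= x v)].
  apply/setP => y; rewrite !inE -ltNge.
  case E: (x w < x y); rewrite ?andbT ?andbF //=; rewrite (lt_trans h1 E) //.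
have -> : [set y | ((x u <= x y) && (x y < x v)) && (x y < x w)] =
          [set y | (x u <= x y) && (x y < x w)].
  apply/setP => y; rewrite !inE; case: (x u <= x y) => //=.
  case E: (x y < x w); rewrite ?andbT ?andbF //; apply: (lt_trans E h2).
have -> : [set y | ((x u <= x y) && (x y < x v)) && ~~ (x y < x w)] =
          [set y | (x w <= x y) && (x y < x v)].
  apply/setP => y; rewrite !inE -leNgt.
  case E: (x w <= x y); rewrite ?andbT ?andbF //=; rewrite (ltW (lt_le_trans h1 E)) //.
by rewrite addnACA.
Qed.

Definition AC (n : nat) (x : config 'I_n) :=
  forall u v, x u < x v -> (forall w, ~~ ((x u < x w) && (x w < x v))) ->
    x v - x u < (cnt x u v)%:Z.

Lemma AC_Rev (n : nat) (x : config 'I_n) : AC x -> Rev x.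
Proof.
move=> H; apply/Rev_iff.
suff: forall m u v, (`|x v - x u| <= m)%N -> x u < x v -> x v - x u < (cnt x u v)%:Z.
  by move=> S u v; apply: (S _ u v (leqnn _)).
elim=> [|m IH] u v hm huv.
  by move: hm; rewrite leqn0 absz_eq0 subr_eq0 => /eqP E; move: huv; rewrite E ltxx.
case: (pickP (fun w => (x u < x w) && (x w < x v))) => [w /andP [h1 h2]|none].
- rewrite (cnt_add h1 h2) PoszD.
  have a1 := IH u w; have a2 := IH w v.
  have d1 : (`|x w - x u| <= m)%N.
    move: hm; rewrite -!lez_nat !abszE !gtr0_norm ?subr_gt0 //; try exact: lt_trans h2.
    lia.
  have d2 : (`|x v - x w| <= m)%N.
    move: hm; rewrite -!lez_nat !abszE !gtr0_norm ?subr_gt0 //; try exact: lt_trans h2.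
    lia.
  have := a1 d1 h1; have := a2 d2 h2; lra.
- by apply: H => // w; rewrite none.
Qed.

Lemma cnt_adj (n : nat) (x : config 'I_n) u v : x u < x v ->
  (forall w, ~~ ((x u < x w) && (x w < x v))) ->
  cnt x u v = (#|[set w | x w == x v]| + #|[set w | x w == x u]|)%N.
Proof.
move=> huv H; rewrite /cnt; congr addn.
- apply: eq_card => w; rewrite !inE; have := H w.
  case: (ltrgtP (x w) (x v)) => h /=; rewrite ?andbT ?andbF //.
  + by move/negbTE.
  + by rewrite h huv.
- apply: eq_card => w; rewrite !inE; have := H w.
  case: (ltrgtP (x u) (x w)) => h /=; rewrite ?andbT ?andbF //.
  + by move/negbTE.
  + by rewrite -h huv.
Qed.

Lemma cnt_le (n : nat) (x : config 'I_n) u v : (cnt x u v <= n + n)%N.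
Proof.
rewrite /cnt; apply: leq_add; (apply: leq_trans (max_card _) _; by rewrite card_ord).
Qed.

Local Close Scope ring_scope.

Definition vals (n : nat) (f : 'I_n -> nat) : seq nat :=
  sort leq (undup [seq f v | v <- enum 'I_n]).

Lemma vals_sorted n (f : 'I_n -> nat) : sorted ltn (vals f).
Proof.
rewrite ltn_sorted_uniq_leq sort_uniq undup_uniq /=.
apply: sort_sorted; exact: leq_total.
Qed.

Lemma vals_sorted_leq n (f : 'I_n -> nat) : sorted leq (vals f).
Proof. apply: sort_sorted; exact: leq_total. Qed.

Lemma mem_vals n (f : 'I_n -> nat) a : (a \in vals f) = [exists v, f v == a].
Proof.
rewrite mem_sort mem_undup; apply/mapP/existsP => [[v _ ->]|[v /eqP <-]].
  by exists v.
by exists v; rewrite ?mem_enum.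
Qed.

Lemma f_in_vals n (f : 'I_n -> nat) v : f v \in vals f.
Proof. by rewrite mem_vals; apply/existsP; exists v. Qed.

Lemma size_vals n (f : 'I_n -> nat) : (size (vals f) <= n)%N.
Proof.
rewrite size_sort; apply: leq_trans (size_undup _) _.
by rewrite size_map size_enum_ord.
Qed.

Lemma nth_vals_ex n (f : 'I_n -> nat) i : (i < size (vals f))%N ->
  exists v, f v = nth 0%N (vals f) i.
Proof.
move=> hi; have := mem_nth 0%N hi; rewrite mem_vals => /existsP [v /eqP h].
by exists v.
Qed.

Lemma vals_lt n (f : 'I_n -> nat) i j : (i < j)%N -> (j < size (vals f))%N ->
  (nth 0%N (vals f) i < nth 0%N (vals f) j)%N.
Proof.
move=> hij hj; apply: (sorted_ltn_nth ltn_trans 0%N (vals_sorted f)) => //.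
rewrite inE; exact: ltn_trans hj.
Qed.

Lemma vals_le n (f : 'I_n -> nat) i j : (i <= j)%N -> (j < size (vals f))%N ->
  (nth 0%N (vals f) i <= nth 0%N (vals f) j)%N.
Proof.
move=> hij hj; apply: (sorted_leq_nth leq_trans leqnn 0%N (vals_sorted_leq f)) => //.
rewrite inE; exact: leq_ltn_trans hj.
Qed.

Lemma vals_idx n (f : 'I_n -> nat) v :
  nth 0%N (vals f) (index (f v) (vals f)) = f v /\ (index (f v) (vals f) < size (vals f))%N.
Proof. by rewrite nth_index ?index_mem f_in_vals. Qed.

Lemma vals_lt_idx n (f : 'I_n -> nat) i j : (i < size (vals f))%N -> (j < size (vals f))%N ->
  (nth 0%N (vals f) i < nth 0%N (vals f) j)%N -> (i < j)%N.
Proof.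
move=> hi hj h; rewrite ltnNge; apply/negP => hji.
by have := vals_le hji hi; rewrite leqNgt h.
Qed.

Lemma vals_adj n (f : 'I_n -> nat) i w : (i.+1 < size (vals f))%N ->
  ~~ ((nth 0%N (vals f) i < f w) && (f w < nth 0%N (vals f) i.+1))%N.
Proof.
move=> hi; apply/negP => /andP [h1 h2].
have [e he] := vals_idx f w.
rewrite -e in h1 h2.
have := vals_lt_idx (ltnW hi) he h1; have := vals_lt_idx he hi h2.
lia.
Qed.

Definition idx n N (t : N.-tuple {set 'I_n}) (v : 'I_n) : nat :=
  find (fun B : {set 'I_n} => v \in B) t.

Lemma disj_card n (A B : {set 'I_n}) : [disjoint A & B] -> (#|A| + #|B| <= n)%N.
Proof.
move=> h; have := cardsUI A B; rewrite (disjoint_setI0 h) cards0 addn0 => <-.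
by apply: leq_trans (max_card _) _; rewrite card_ord.
Qed.

Section Osp.
Variables (n N : nat) (t : N.-tuple {set 'I_n}).
Hypothesis ht : ordered_set_partition t.

Lemma osp_ne i : (i < N)%N -> nth set0 t i != set0.
Proof.
move=> hi; move: ht => /and3P [/forallP h _ _].
by have := h (Ordinal hi); rewrite (tnth_nth set0).
Qed.

Lemma osp_disj i j : (i < N)%N -> (j < N)%N -> i != j -> [disjoint nth set0 t i & nth set0 t j].
Proof.
move=> hi hj hij; move: ht => /and3P [_ /forallP h _].
have := h (Ordinal hi) => /forallP /(_ (Ordinal hj)) /implyP; rewrite !(tnth_nth set0).
by apply.
Qed.

Lemma osp_cover v : exists2 i, (i < N)%N & v \in nth set0 t i.
Proof.
move: ht => /and3P [_ _ /eqP h].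
have : v \in \bigcup_(i < N) tnth t i by rewrite h inE.
by move=> /bigcupP [i _ hv]; exists i => //; rewrite -(tnth_nth set0).
Qed.

Lemma idx_lt v : (idx t v < N)%N.
Proof.
have [i hi hv] := osp_cover v.
rewrite -[X in (_ < X)%N](size_tuple t) /idx -has_find; apply/hasP; exists (nth set0 t i) => //.
by apply: mem_nth; rewrite size_tuple.
Qed.

Lemma idx_mem v : v \in nth set0 t (idx t v).
Proof.
have := nth_find set0 (a := fun B : {set 'I_n} => v \in B) (s := t).
apply; rewrite has_find size_tuple; exact: idx_lt.
Qed.

Lemma idx_eq i v : (i < N)%N -> v \in nth set0 t i -> idx t v = i.
Proof.
move=> hi hv; apply/eqP; apply/negPn/negP => hne.
have := disjointFr (osp_disj (idx_lt v) hi hne) (idx_mem v).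
by rewrite hv.
Qed.

Lemma block_eq i : (i < N)%N -> [set v | idx t v == i] = nth set0 t i.
Proof.
move=> hi; apply/setP => v; rewrite inE; apply/eqP/idP => [<-|]; first exact: idx_mem.
exact: idx_eq.
Qed.

Lemma osp_ex i : (i < N)%N -> exists v, idx t v = i.
Proof.
move=> hi; have /set0Pn [v hv] := osp_ne hi; exists v; exact: idx_eq.
Qed.

Lemma osp_s i : (0 < i)%N -> (i < N)%N -> (#|nth set0 t i.-1| + #|nth set0 t i| <= n)%N.
Proof.
move=> h0 hi; apply: disj_card; apply: osp_disj => //; first by apply: leq_ltn_trans hi; exact: leq_pred.
by rewrite neq_ltn; apply/orP; left; rewrite prednK.
Qed.

End Osp.

Definition gn N n (g : {ffun 'I_N -> 'I_n.+1}) (i : nat) : nat :=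
  if insub i is Some k then nat_of_ord (g k) else 0%N.

Definition Gs N n (g : {ffun 'I_N -> 'I_n.+1}) (j : nat) : nat :=
  \sum_(1 <= i < j.+1) gn g i.

Definition sz n N (t : N.-tuple {set 'I_n}) (i : nat) : nat :=
  (#|nth set0 t i.-1| + #|nth set0 t i|)%N.

Definition gapok n N (t : N.-tuple {set 'I_n}) (g : {ffun 'I_N -> 'I_n.+1}) : bool :=
  [forall i : 'I_N, if nat_of_ord i == 0%N then nat_of_ord (g i) == 0%N
                   else (0 < g i)%N && (g i < sz t i)%N].

Definition dec n N (t : N.-tuple {set 'I_n}) (g : {ffun 'I_N -> 'I_n.+1}) (v : 'I_n) : nat :=
  Gs g (idx t v).

Definition cz n (f : 'I_n -> nat) : config 'I_n := fun v => Posz (f v).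

Lemma gnE N n (g : {ffun 'I_N -> 'I_n.+1}) (k : 'I_N) : gn g k = g k.
Proof. by rewrite /gn valK. Qed.

Lemma Gs0 N n (g : {ffun 'I_N -> 'I_n.+1}) : Gs g 0 = 0%N.
Proof. by rewrite /Gs big_geq. Qed.

Lemma GsS N n (g : {ffun 'I_N -> 'I_n.+1}) j : Gs g j.+1 = (Gs g j + gn g j.+1)%N.
Proof. by rewrite /Gs big_nat_recr. Qed.

Section Dec.
Variables (n N : nat) (t : N.-tuple {set 'I_n}) (g : {ffun 'I_N -> 'I_n.+1}).
Hypothesis ht : ordered_set_partition t.
Hypothesis hg : gapok t g.

Lemma gn_pos i : (0 < i)%N -> (i < N)%N -> (0 < gn g i < sz t i)%N.
Proof.
move=> h0 hi; move: hg => /forallP /(_ (Ordinal hi)) /=.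
have -> : gn g i = g (Ordinal hi) by rewrite -gnE.
have h0' : (i == 0)%N = false by lia.
by rewrite h0'.
Qed.

Lemma Gs_lt i j : (i < j)%N -> (j < N)%N -> (Gs g i < Gs g j)%N.
Proof.
elim: j => // j IH hij hj.
rewrite GsS; have := gn_pos (ltn0Sn j) hj; move: hij; rewrite ltnS leq_eqVlt => /orP [/eqP ->|h].
  lia.
have := IH h (ltnW hj); lia.
Qed.

Lemma Gs_le i j : (i <= j)%N -> (j < N)%N -> (Gs g i <= Gs g j)%N.
Proof. rewrite leq_eqVlt => /orP [/eqP ->//|h] hj; exact: ltnW (Gs_lt h hj). Qed.

Lemma Gs_inj i j : (i < N)%N -> (j < N)%N -> Gs g i = Gs g j -> i = j.
Proof.
move=> hi hj e; case: (ltngtP i j) => // h.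
- by have := Gs_lt h hj; rewrite e ltnn.
- by have := Gs_lt h hi; rewrite e ltnn.
Qed.

Lemma dec_lt u v : (dec t g u < dec t g v)%N = (idx t u < idx t v)%N.
Proof.
apply/idP/idP => h; last by apply: Gs_lt => //; exact: idx_lt.
rewrite ltnNge; apply/negP => h2.
by have := Gs_le h2 (idx_lt ht u); rewrite leqNgt h.
Qed.

Lemma dec_eq u v : (dec t g u == dec t g v) = (idx t u == idx t v).
Proof.
apply/eqP/eqP => [e|e]; last by rewrite /dec e.
by apply: Gs_inj => //; exact: idx_lt.
Qed.


Lemma dec_AC : AC (cz (dec t g)).
Proof.
move=> u v; rewrite /cz ltz_nat => huv H.
have hlt : (idx t u < idx t v)%N by rewrite -dec_lt.
have hv : idx t v = (idx t u).+1.
  apply/eqP; rewrite eqn_leq hlt andbT leqNgt; apply/negP => h.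
  have [w hw] := osp_ex ht (ltn_trans h (idx_lt ht v)).
  have := H w; rewrite /cz !ltz_nat !dec_lt hw ltnSn /=.
  by rewrite h.
rewrite cnt_adj /cz ?ltz_nat //.
have -> : #|[set w | Posz (dec t g w) == Posz (dec t g v)]| = #|nth set0 t (idx t v)|.
  rewrite -(block_eq ht (idx_lt ht v)); apply: eq_card => w; rewrite !inE eqz_nat.
  by rewrite dec_eq.
have -> : #|[set w | Posz (dec t g w) == Posz (dec t g u)]| = #|nth set0 t (idx t u)|.
  rewrite -(block_eq ht (idx_lt ht u)); apply: eq_card => w; rewrite !inE eqz_nat.
  by rewrite dec_eq.
have hv' : ((idx t u).+1 < N)%N by rewrite -hv; exact: idx_lt.
have := gn_pos (ltn0Sn (idx t u)) hv'.
rewrite /dec hv GsS /sz /=.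
rewrite -[X in (_ < _ < X)%N]addnC => /andP [_ h].
lia.
Qed.

Lemma dec_Rev : Rev (cz (dec t g)).
Proof. exact: AC_Rev dec_AC. Qed.

Lemma dec_bound v : (dec t g v < n + n)%N.
Proof.
have N0 : (0 < N)%N by apply: leq_ltn_trans (idx_lt ht v).
have [u hu] := osp_ex ht N0.
have du : dec t g u = 0%N by rewrite /dec hu Gs0.
case: (posnP (dec t g v)) => [->|hpos]; first by have := ltn_ord v; lia.
have := (proj1 (Rev_iff _) dec_Rev) u v; rewrite /cz du ltz_nat => /(_ hpos).
have := cnt_le (cz (dec t g)) u v.
rewrite subr0 ltz_nat => h1 h2; exact: leq_trans h2 h1.
Qed.

Lemma dec_vals : vals (dec t g) = [seq Gs g i | i <- iota 0 N].
Proof.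
apply: (irr_sorted_eq ltn_trans ltnn (vals_sorted _)).
  rewrite (homo_sorted_in (P := [pred i | (i < N)%N]) (e := ltn)) ?iota_ltn_sorted //.
    by move=> i j _; rewrite inE => hj h; apply: Gs_lt.
  by apply/allP => i; rewrite mem_iota inE.
move=> a; rewrite mem_vals; apply/existsP/mapP => [[v /eqP <-]|[i]].
  by exists (idx t v) => //; rewrite mem_iota /= add0n idx_lt.
rewrite mem_iota add0n /= => hi ->; have [v hv] := osp_ex ht hi.
by exists v; rewrite /dec hv.
Qed.

End Dec.

Definition blocks n N (f : 'I_n -> nat) : N.-tuple {set 'I_n} :=
  @Tuple N _ (mkseq (fun i => [set v | f v == nth 0%N (vals f) i]) N) (introT eqP (size_mkseq _ _)).

Definition gaps n N (f : 'I_n -> nat) : {ffun 'I_N -> 'I_n.+1} :=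
  [ffun i : 'I_N => inord (nth 0%N (vals f) i - nth 0%N (vals f) i.-1)].

Lemma blocks_nth n N (f : 'I_n -> nat) i : (i < N)%N ->
  nth set0 (blocks N f) i = [set v | f v == nth 0%N (vals f) i].
Proof. by move=> hi; rewrite /blocks /= nth_mkseq. Qed.

Lemma vals_uniq n (f : 'I_n -> nat) : uniq (vals f).
Proof. by rewrite sort_uniq undup_uniq. Qed.

Lemma blocks_osp n N (f : 'I_n -> nat) : size (vals f) = N -> ordered_set_partition (blocks N f).
Proof.
move=> hN; apply/and3P; split.
- apply/forallP => i; rewrite (tnth_nth set0) blocks_nth //.
  have hi : (i < size (vals f))%N by rewrite hN.
  have [v hv] := nth_vals_ex hi; apply/set0Pn; exists v; by rewrite inE hv.
- apply/forallP => i; apply/forallP => j; apply/implyP => hij.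
  rewrite !(tnth_nth set0) !blocks_nth // -setI_eq0; apply/eqP/setP => v; rewrite !inE.
  apply/negP => /andP [/eqP -> /eqP e]; move: hij; rewrite -(inj_eq val_inj) /=.
  by move: e => /eqP; rewrite nth_uniq ?vals_uniq ?hN // => ->.
- apply/eqP/setP => v; rewrite inE; apply/bigcupP.
  have [e he] := vals_idx f v; rewrite hN in he.
  exists (Ordinal he) => //; rewrite (tnth_nth set0) blocks_nth //= inE e //.
Qed.

Lemma vals_gap n (f : 'I_n -> nat) i : Rev (cz f) -> (0 < i)%N -> (i < size (vals f))%N ->
  (nth 0%N (vals f) i - nth 0%N (vals f) i.-1 <
     #|[set v | f v == nth 0%N (vals f) i.-1]| + #|[set v | f v == nth 0%N (vals f) i]|)%N.
Proof.
move=> R h0 hi.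
have hi1 : (i.-1 < size (vals f))%N by apply: leq_ltn_trans hi; exact: leq_pred.
have [u hu] := nth_vals_ex hi1; have [v hv] := nth_vals_ex hi.
have lt : (nth 0%N (vals f) i.-1 < nth 0%N (vals f) i)%N by apply: vals_lt => //; lia.
have huv : (cz f u < cz f v)%R by rewrite /cz ltz_nat hu hv.
have nb : forall w, ~~ ((cz f u < cz f w) && (cz f w < cz f v))%R.
  move=> w; rewrite /cz !ltz_nat hu hv.
  have hh : (i.-1.+1 < size (vals f))%N by rewrite prednK.
  have := @vals_adj n f i.-1 w hh; by rewrite prednK.
have := (proj1 (Rev_iff _) R) u v huv.
rewrite (cnt_adj huv nb).
have -> : #|[set w | cz f w == cz f v]| = #|[set w | f w == nth 0%N (vals f) i]|.
  by apply: eq_card => w; rewrite !inE /cz eqz_nat hv.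
have -> : #|[set w | cz f w == cz f u]| = #|[set w | f w == nth 0%N (vals f) i.-1]|.
  by apply: eq_card => w; rewrite !inE /cz eqz_nat hu.
rewrite /cz hu hv; lia.
Qed.

Lemma vals_gap_le n (f : 'I_n -> nat) i : (0 < i)%N -> (i < size (vals f))%N ->
  (#|[set v | f v == nth 0%N (vals f) i.-1]| + #|[set v | f v == nth 0%N (vals f) i]| <= n)%N.
Proof.
move=> h0 hi; apply: disj_card; rewrite -setI_eq0; apply/eqP/setP => v; rewrite !inE.
apply/negP => /andP [/eqP e1 /eqP e2].
have hlt : (i.-1 < i)%N by lia.
by have := vals_lt hlt hi; rewrite -e1 -e2 ltnn.
Qed.

Lemma gaps_val n N (f : 'I_n -> nat) (i : 'I_N) : Rev (cz f) -> size (vals f) = N ->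
  nat_of_ord (gaps N f i) = (nth 0%N (vals f) i - nth 0%N (vals f) i.-1)%N.
Proof.
move=> R hN; rewrite /gaps ffunE inordK //.
case: (posnP i) => [->|h0]; first by rewrite subnn.
have hi : (i < size (vals f))%N by rewrite hN.
have := vals_gap R h0 hi; have := vals_gap_le h0 hi; lia.
Qed.

Lemma gaps_ok n N (f : 'I_n -> nat) : Rev (cz f) -> size (vals f) = N ->
  gapok (blocks N f) (gaps N f).
Proof.
move=> R hN; apply/forallP => i; rewrite (gaps_val i R hN).
case: eqP => [->|h0]; first by rewrite subnn.
have hi : (i < size (vals f))%N by rewrite hN.
have h0' : (0 < i)%N by lia.
rewrite /sz !blocks_nth //; last by apply: leq_ltn_trans (ltn_ord i); exact: leq_pred.
have := vals_gap R h0' hi; have := vals_lt (f := f) (i := i.-1) (j := i).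
move=> a b; rewrite subn_gt0 a //; lia.
Qed.

Lemma vals_head n (f : 'I_n -> nat) : 0%N \in vals f -> nth 0%N (vals f) 0 = 0%N.
Proof.
move=> h; have hk : (index 0%N (vals f) < size (vals f))%N by rewrite index_mem.
have := vals_le (leq0n _) hk; rewrite nth_index //; lia.
Qed.

Lemma enc_inj n N (f1 f2 : 'I_n -> nat) :
  Rev (cz f1) -> Rev (cz f2) -> 0%N \in vals f1 -> 0%N \in vals f2 ->
  size (vals f1) = N -> size (vals f2) = N ->
  blocks N f1 = blocks N f2 -> gaps N f1 = gaps N f2 -> forall v, f1 v = f2 v.
Proof.
move=> R1 R2 z1 z2 s1 s2 hb hg.
have hv : vals f1 = vals f2.
  apply: (eq_from_nth (x0 := 0%N)); first by rewrite s1 s2.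
  rewrite s1; elim=> [_|i IH hi]; first by rewrite !vals_head.
  have := gaps_val (Ordinal hi) R1 s1; have := gaps_val (Ordinal hi) R2 s2.
  rewrite hg /= => e2 e1.
  have hi1 : (i.+1 < size (vals f1))%N by rewrite s1.
  have hi2 : (i.+1 < size (vals f2))%N by rewrite s2.
  have l1 := @vals_lt n f1 i i.+1 (ltnSn i) hi1.
  have l2 := @vals_lt n f2 i i.+1 (ltnSn i) hi2.
  have := IH (ltnW hi); lia.
move=> v; have [e he] := vals_idx f1 v.
have hN : (index (f1 v) (vals f1) < N)%N by rewrite -s1.
have : v \in nth set0 (blocks N f1) (index (f1 v) (vals f1)).
  by rewrite blocks_nth // inE e.
by rewrite hb blocks_nth // inE -hv e => /eqP.
Qed.

Section DecFacts.
Variables (n N : nat) (t : N.-tuple {set 'I_n}) (g : {ffun 'I_N -> 'I_n.+1}).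
Hypothesis ht : ordered_set_partition t.
Hypothesis hg : gapok t g.

Lemma dec_size : size (vals (dec t g)) = N.
Proof. by rewrite (dec_vals ht hg) size_map size_iota. Qed.

Lemma dec_nth i : (i < N)%N -> nth 0%N (vals (dec t g)) i = Gs g i.
Proof. by move=> hi; rewrite (dec_vals ht hg) (nth_map 0%N) ?size_iota // nth_iota. Qed.

Lemma dec_blocks : blocks N (dec t g) = t.
Proof.
apply: val_inj; apply: (eq_from_nth (x0 := set0)); first by rewrite !size_tuple.
rewrite size_tuple => i hi; rewrite blocks_nth // dec_nth // -(block_eq ht hi).
apply/setP => v; rewrite !inE; apply/eqP/eqP => [e|e]; last by rewrite /dec e.
apply: (Gs_inj ht hg) => //; exact: idx_lt.
Qed.

Lemma dec_gaps : gaps N (dec t g) = g.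
Proof.
apply/ffunP => i; apply: val_inj.
rewrite /gaps ffunE !dec_nth //; last by apply: leq_ltn_trans (ltn_ord i); exact: leq_pred.
move: hg => /forallP /(_ i).
case: (posnP i) => [e|h0].
  rewrite e subnn /= => /eqP ->; by rewrite inordK.
have -> : Gs g i = (Gs g i.-1 + gn g i)%N by rewrite -{1}(prednK h0) GsS prednK.
rewrite gnE addKn => _; exact: inordK.
Qed.

Lemma dec_zero (v0 : 'I_n) : 0%N \in vals (dec t g).
Proof.
have N0 : (0 < N)%N by apply: leq_ltn_trans (idx_lt ht v0).
have [u hu] := osp_ex ht N0.
by rewrite mem_vals; apply/existsP; exists u; rewrite /dec hu Gs0.
Qed.

End DecFacts.

Lemma card_range M b : (b <= M)%N -> #|[pred k : 'I_M | (0 < k)%N && (k < b)%N]| = b.-1.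
Proof.
move=> hb; rewrite -sum1_card.
rewrite (eq_bigl (fun k : 'I_M => ((k < b) && (1 <= k))%N)); last first.
  by move=> k; rewrite inE andbC.
rewrite -(big_geq_mkord 1 M (fun k => k < b)%N (fun _ => 1%N)).
rewrite (eq_bigl (fun i => true && (i < b)%N)) // -(big_nat_widen 1 b M predT (fun _ => 1%N)) //.
rewrite sum_nat_const_nat muln1; lia.
Qed.

Definition gapA n N (t : N.-tuple {set 'I_n}) (i : 'I_N) : pred 'I_n.+1 :=
  fun k => if nat_of_ord i == 0%N then nat_of_ord k == 0%N
           else (0 < k)%N && (k < sz t i)%N.

Lemma card_gapset n N (t : N.-tuple {set 'I_n}) : ordered_set_partition t ->
  #|[set g : {ffun 'I_N -> 'I_n.+1} | gapok t g]| = osp_weight t.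
Proof.
move=> ht.
have -> : #|[set g : {ffun 'I_N -> 'I_n.+1} | gapok t g]| = #|family (gapA t)|.
  by apply: eq_card => g; rewrite inE.
rewrite card_family foldrE big_map big_enum /=.
have E : forall i : 'I_N, #|gapA t i| = if nat_of_ord i == 0%N then 1%N else (sz t i).-1.
  move=> i; rewrite /gapA; case: eqP => h0.
    rewrite -(card1 (ord0 : 'I_n.+1)); apply: eq_card => k; by rewrite !inE.
  have hi : (0 < i)%N by lia.
  rewrite -(@card_range n.+1 (sz t i)); first by apply: eq_card.
  apply: leq_trans (osp_s ht hi (ltn_ord i)) _; exact: leqnSn.
rewrite (eq_bigr _ (fun i _ => E i)) /osp_weight.
case: N t ht {E} => [|N] t ht; first by rewrite big_ord0 big_geq.
rewrite big_ord_recl /= mul1n big_add1 /= big_mkord; apply: eq_bigr => i _.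
by rewrite /sz /= subn1.
Qed.

Definition FT n := {ffun 'I_n -> 'I_(n + n).+1}.
Definition fv n (F : FT n) : 'I_n -> nat := fun v => nat_of_ord (F v).
Definition revb n (x : config 'I_n) : bool :=
  [forall u, forall v, (x u < x v)%R ==> (fire x v < fire x u)%R].

Lemma revbP n (x : config 'I_n) : reflect (Rev x) (revb x).
Proof.
apply: (iffP forallP) => [H u v h|H u].
  by have := H u => /forallP /(_ v) /implyP; apply.
by apply/forallP => v; apply/implyP; apply: H.
Qed.

Definition Cn n : {set FT n} := [set F | (0%N \in vals (fv F)) && revb (cz (fv F))].

Definition fib n N (t : N.-tuple {set 'I_n}) : {set FT n} :=
  [set F in Cn n | (size (vals (fv F)) == N) && (blocks N (fv F) == t)].

Definition decF n N (t : N.-tuple {set 'I_n}) (g : {ffun 'I_N -> 'I_n.+1}) : FT n :=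
  [ffun v => inord (dec t g v)].

Lemma fv_decF n N (t : N.-tuple {set 'I_n}) g : ordered_set_partition t -> gapok t g ->
  fv (decF t g) = dec t g.
Proof.
move=> ht hg; apply: functional_extensionality => v.
rewrite /fv /decF ffunE inordK //; apply: leq_trans (dec_bound ht hg v) _; exact: leqnSn.
Qed.

Lemma fib_card n N (t : N.-tuple {set 'I_n}) (v0 : 'I_n) :
  #|fib t| = if ordered_set_partition t then #|[set g : {ffun 'I_N -> 'I_n.+1} | gapok t g]| else 0%N.
Proof.
case: ifP => ht; last first.
  apply/eqP; rewrite cards_eq0; apply/eqP/setP => F; rewrite !inE.
  apply/negP => /andP [_ /andP [/eqP hs /eqP hb]]; move: ht; by rewrite -hb blocks_osp.
have hinj : {in fib t &, injective (fun F => gaps N (fv F))}.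
  move=> F1 F2; rewrite !inE => /andP [/andP [z1 /revbP r1] /andP [/eqP s1 /eqP b1]].
  move=> /andP [/andP [z2 /revbP r2] /andP [/eqP s2 /eqP b2]] hg.
  have := enc_inj r1 r2 z1 z2 s1 s2 (etrans b1 (esym b2)) hg => e.
  by apply/ffunP => v; apply: val_inj; apply: e.
rewrite -(card_in_imset hinj).
suff -> : [set gaps N (fv x) | x in fib t] = [set g | gapok t g] by [].
apply/eqP; rewrite eqEsubset; apply/andP; split.
  apply/subsetP => g /imsetP [F]; rewrite !inE => /andP [/andP [_ /revbP r] /andP [/eqP s /eqP b]] ->.
  by rewrite -{1}b; apply: gaps_ok.
apply/subsetP => g; rewrite inE => hg; apply/imsetP; exists (decF t g).
  rewrite !inE (fv_decF ht hg) dec_zero // dec_size // eqxx dec_blocks // eqxx /=.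
  by rewrite andbT; apply/revbP; apply: dec_Rev.
by rewrite (fv_decF ht hg) dec_gaps.
Qed.

Lemma size_vals_fv n (F : FT n) : (size (vals (fv F)) < n.+1)%N.
Proof. by rewrite ltnS; apply: size_vals. Qed.

Lemma card_Cn n : (0 < n)%N -> #|Cn n| = osp_sum n.
Proof.
move=> n0; pose v0 : 'I_n := Ordinal n0.
rewrite -sum1_card.
rewrite (partition_big (fun F : FT n => (inord (size (vals (fv F))) : 'I_n.+1)) predT) //=.
have E : forall N : 'I_n.+1,
    \sum_(F | (F \in Cn n) && (inord (size (vals (fv F))) == N)) 1%N =
    \sum_(t : N.-tuple {set 'I_n} | ordered_set_partition t) osp_weight t.
  move=> N.
  rewrite (partition_big (fun F : FT n => blocks N (fv F)) predT) //=.
  rewrite [RHS]big_mkcond /=; apply: eq_bigr => t _.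
  rewrite (eq_bigl (fun F => F \in fib t)); last first.
    move=> F; rewrite !inE -andbA; congr andb; congr andb.
    by rewrite -(inj_eq val_inj) /= inordK // size_vals_fv.
  rewrite sum1_card (fib_card t v0); case: ifP => ht //; exact: card_gapset.
rewrite (eq_bigr _ (fun N _ => E N)) /osp_sum.
rewrite -(big_mkord predT (fun N => \sum_(t : N.-tuple {set 'I_n} | ordered_set_partition t) osp_weight t)).
rewrite [in LHS]big_ltn // [X in (X + _)%N]big1 ?add0n //.
move=> t; rewrite /ordered_set_partition => /and3P [_ _ /eqP h].
have : v0 \in \bigcup_(i < 0) tnth t i by rewrite h inE.
by rewrite big_ord0 inE.
Qed.

Lemma cnt_shift n (x : config 'I_n) (c : int) u v :
  cnt (fun w => x w + c)%R u v = cnt x u v.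
Proof.
rewrite /cnt; congr addn; apply: eq_card => w; by rewrite !inE !lerD2r !ltrD2r.
Qed.

Lemma Rev_shift n (x : config 'I_n) (c : int) : Rev x -> Rev (fun w => x w + c)%R.
Proof.
move=> /Rev_iff H; apply/Rev_iff => u v; rewrite cnt_shift ltrD2r => h.
have := H u v h; lra.
Qed.

Theorem main_thm (n : nat) : (1 <= n)%N ->
  exists f : 'I_(osp_sum n) -> config 'I_n,
    (forall i, pd_period (@complete_adj n) (f i)) /\
    (forall i j, config_equiv (f i) (f j) -> i = j) /\
    (forall D : config 'I_n, pd_period (@complete_adj n) D ->
       exists i, config_equiv D (f i)).
Proof.
move=> hn.
have hc := card_Cn hn.
pose f (i : 'I_(osp_sum n)) : config 'I_n := cz (fv (enum_val (cast_ord (esym hc) i))).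
exists f; split; [|split].
- move=> i; apply: Rev_period; rewrite /f.
  have := enum_valP (cast_ord (esym hc) i); rewrite inE => /andP [_ /revbP]; exact.
- move=> i j [c hcij].
  have := enum_valP (cast_ord (esym hc) i); rewrite inE => /andP [zi _].
  have := enum_valP (cast_ord (esym hc) j); rewrite inE => /andP [zj _].
  move: zi zj; rewrite !mem_vals => /existsP [vi /eqP ei] /existsP [vj /eqP ej].
  have c0 : c = 0%R.
    have h1 := hcij vi; have h2 := hcij vj.
    move: h1 h2; rewrite /f /cz ei ej.
    set a := Posz (fv _ vj); set b := Posz (fv _ vi).
    have : (0 <= a)%R by []. have : (0 <= b)%R by [].
    lra.
  apply: (cast_ord_inj (eq_n := esym hc)); apply: enum_val_inj.
  apply/ffunP => v; apply: val_inj; have := hcij v; rewrite c0 addr0 /f /cz /fv.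
  by case.
- move=> D hD; have R := period_Rev hD.
  have [v0 _ hmin] := @extremumP int 'I_n (fun a b => (a <= b)%R) (Ordinal hn) predT D
     lexx le_trans le_total isT.
  have bnd : forall v, (`|D v - D v0|%N < (n + n).+1)%N.
    move=> v; have := hmin v isT; rewrite le_eqVlt => /orP [/eqP e|h].
      by rewrite e subrr.
    have := (proj1 (Rev_iff D) R) v0 v h; have := cnt_le D v0 v.
    rewrite -(ltz_nat) -lez_nat gez0_abs ?subr_ge0 ?(ltW h) //.
    lia.
  pose F : FT n := [ffun v => inord `|D v - D v0|%N].
  have fvF : forall v, Posz (fv F v) = (D v - D v0)%R.
    move=> v; rewrite /fv ffunE inordK // gez0_abs // subr_ge0; exact: hmin.
  have hF : F \in Cn n.
    rewrite inE; apply/andP; split.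
      by rewrite mem_vals; apply/existsP; exists v0; rewrite -eqz_nat fvF subrr.
    apply/revbP.
    have -> : cz (fv F) = (fun w => D w + (- D v0))%R.
      by apply: functional_extensionality => w; rewrite /cz fvF.
    exact: Rev_shift.
  exists (cast_ord hc (enum_rank_in hF F)); exists (- D v0)%R => v.
  rewrite /f cast_ordK enum_rankK_in // /cz fvF //.
Qed.

Theorem theorem5p1 (n : nat) : (1 <= n)%N ->
  exists f : 'I_(osp_sum n) -> config 'I_n,
    (forall i, pd_period (@complete_adj n) (f i)) /\
    (forall i j, config_equiv (f i) (f j) -> i = j) /\
    (forall D : config 'I_n, pd_period (@complete_adj n) D ->
       exists i, config_equiv D (f i)).
Proof. exact: main_thm. Qed.
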